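(* For $a,b\ge1$ and $P=[a]\times[b]$, we have $\sum_{p\in P}\mathbb{1}_p\equiv \frac{ab}{2}$.
   Context: $[a]\times[b]=\{(i,j)\colon 1\le i\le a,\ 1\le j\le b\}$ with $(i,j)\le(i',j')$ iff $i\le i'$ and $j\le j'$. $\mathcal{J}(P)$ is the set of order ideals of $P$. For $x\in P$, $I\in\mathcal{J}(P)$: $\mathbb{1}_x(I)=1$ if $x\in I$, else $0$; $T_x^+(I)=1$ if $x$ is a minimal element of $P\setminus I$, else $0$; $T_x^-(I)=1$ if $x$ is a maximal element of $I$, else $0$; $T_x=T_x^+-T_x^-$. For $f,g\colon\mathcal{J}(P)\to\mathbb{R}$, $f\equiv g$ means $f-g=\sum_{x\in P}c_xT_x$ for some real constants $c_x$; a real number denotes the corresponding constant function. *)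

(* Defs.v *)
From mathcomp Require Import all_boot all_order all_algebra.
From mathcomp Require Import reals.
Set Implicit Arguments. Unset Strict Implicit. Unset Printing Implicit Defensive.
Import Order.TTheory GRing.Theory Num.Theory.
Local Open Scope ring_scope.

(* The poset [a] x [b]; element (i,j) with 0-indexed ordinals i : 'I_a, j : 'I_b
   stands for (i+1, j+1).  Product order. *)
Definition grid (a b : nat) := ('I_a * 'I_b)%type.

Definition gle (a b : nat) (p q : grid a b) : bool :=
  ((p.1 <= q.1)%N && (p.2 <= q.2)%N).

Definition is_ideal (a b : nat) (I : {set grid a b}) : bool :=
  [forall p : grid a b, forall q : grid a b, (gle p q && (q \in I)) ==> (p \in I)].

Section Toggles.
Variables (R : realType) (a b : nat).

Definition ind (x : grid a b) (I : {set grid a b}) : R := (x \in I)%:R.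

Definition Tplus (x : grid a b) (I : {set grid a b}) : R :=
  ((x \notin I) && [forall y : grid a b, ((y \notin I) && gle y x) ==> (y == x)])%:R.

Definition Tminus (x : grid a b) (I : {set grid a b}) : R :=
  ((x \in I) && [forall y : grid a b, ((y \in I) && gle x y) ==> (y == x)])%:R.

Definition Tog (x : grid a b) (I : {set grid a b}) : R := Tplus x I - Tminus x I.

Definition toggle_equiv (f g : {set grid a b} -> R) : Prop :=
  exists c : grid a b -> R, forall I : {set grid a b}, is_ideal I ->
    f I - g I = \sum_(x : grid a b) c x * Tog x I.
End Toggles.

(* Main.v *)
Require Import Defs.
From mathcomp Require Import all_boot all_order all_algebra.
From mathcomp Require Import reals.
From mathcomp Require Import zify ring lra.
Import Order.TTheory GRing.Theory Num.Theory.
Local Open Scope ring_scope.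
Set Implicit Arguments. Unset Strict Implicit. Unset Printing Implicit Defensive.

Lemma sumn_lt (b m : nat) : (\sum_(j < b) (j < m : nat))%N = minn m b.
Proof.
elim: b => [|b IH]; first by rewrite big_ord0; lia.
rewrite big_ord_recr /= IH. case: (ltnP b m) => h; lia.
Qed.

Lemma card_lt (b m : nat) : #|[set k : 'I_b | (k < m)%N]| = minn m b.
Proof.
rewrite -sum1_card -sumn_lt big_mkcond /=.
by apply: eq_bigr => j _; rewrite inE; case: (j < m)%N.
Qed.

Lemma downclosed_card (b : nat) (S : {set 'I_b}) :
  (forall j k : 'I_b, (k <= j)%N -> j \in S -> k \in S) ->
  forall j : 'I_b, (j \in S) = (j < #|S|)%N.
Proof.
move=> hS j; have jb := ltn_ord j.
case: (boolP (j \in S)) => hj.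
  have sub : [set k : 'I_b | (k < j.+1)%N] \subset S.
    by apply/subsetP => k; rewrite inE ltnS => hk; exact: hS j k hk hj.
  have := subset_leq_card sub; rewrite card_lt => h.
  apply/esym; move: h; rewrite (minn_idPl jb) => h; exact: h.
have sub : S \subset [set k : 'I_b | (k < j)%N].
  apply/subsetP => k hk; rewrite inE; case: (ltnP k j) => // hjk.
  by rewrite (hS k j hjk hk) in hj.
have := subset_leq_card sub; rewrite card_lt => h.
apply/esym/negbTE; rewrite -leqNgt; move: h; rewrite (minn_idPl (ltnW jb)) => h; exact: h.
Qed.

Definition Rw a b (I : {set grid a b}) (k : nat) : {set 'I_b} :=
  [set j : 'I_b | [exists i : 'I_a, (val i == k) && ((i, j) \in I)]].
Definition Lf a b (I : {set grid a b}) (k : nat) : nat :=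
  if k is k'.+1 then #|Rw I k'| else b.

Lemma idealP a b (I : {set grid a b}) : is_ideal I ->
  forall p q, gle p q -> q \in I -> p \in I.
Proof.
move=> /forallP h p q hpq hq.
by move: (h p) => /forallP /(_ q) /implyP; apply; rewrite hpq hq.
Qed.

Lemma mem_Rw a b (I : {set grid a b}) (i : 'I_a) (j : 'I_b) :
  (j \in Rw I i) = ((i, j) \in I).
Proof.
rewrite inE; apply/existsP/idP => [[i' /andP [/eqP e h]]|h].
  by have -> : i = i' by apply: val_inj.
by exists i; rewrite eqxx h.
Qed.

Lemma Lf_mono a b (I : {set grid a b}) : is_ideal I ->
  forall k k', (k <= k')%N -> (Lf I k' <= Lf I k)%N.
Proof.
move=> /idealP hI [|k] [|k'] //= hk.
- by rewrite -[X in (_ <= X)%N](card_ord b) max_card.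
- apply: subset_leq_card; apply/subsetP => j; rewrite !inE.
  case/existsP => i' /andP [/eqP e h].
  have e' : nat_of_ord i' = k' := e.
  have ka : (k < a)%N by have := ltn_ord i'; lia.
  apply/existsP; exists (Ordinal ka); rewrite eqxx /=.
  by apply: hI h; rewrite /gle /= leqnn andbT; lia.
Qed.

Lemma Lf_big a b (I : {set grid a b}) k : (a < k)%N -> Lf I k = 0%N.
Proof.
case: k => [//|k] hk /=; apply: eq_card0 => j; rewrite inE.
apply/existsP => [[i /andP [/eqP e _]]]; have e' : nat_of_ord i = k := e.
have := ltn_ord i; lia.
Qed.

Lemma Lf_le_b a b (I : {set grid a b}) k : is_ideal I -> (Lf I k <= b)%N.
Proof. by move=> hI; apply: (Lf_mono hI (leq0n k)). Qed.

Lemma memL a b (I : {set grid a b}) : is_ideal I ->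
  forall (i : 'I_a) (j : 'I_b), ((i, j) \in I) = (j < Lf I i.+1)%N.
Proof.
move=> hI' i j; have hI := idealP hI'.
rewrite /= -mem_Rw; apply: downclosed_card => j1 k1 hk.
by rewrite !mem_Rw; apply: hI; rewrite /gle /= leqnn.
Qed.

Arguments Lf : simpl never.

Lemma TplusE (R : realType) a b (I : {set grid a b}) : is_ideal I ->
  forall (i : 'I_a) (j : 'I_b),
  Tplus R (i, j) I = ((j == Lf I i.+1 :> nat) && (Lf I i.+1 < Lf I i))%N%:R.
Proof.
move=> hI i j; rewrite /Tplus; congr ((nat_of_bool _)%:R).
have mono := Lf_mono hI.
apply/idP/idP.
- move=> /andP [hx /forallP hall]; rewrite memL // -leqNgt in hx.
  have h1 : (j <= Lf I i.+1)%N.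
    case: (posnP j) => [-> //|jpos].
    have jb : (j.-1 < b)%N by have := ltn_ord j; lia.
    have := hall (i, Ordinal jb); rewrite memL // /gle /= xpair_eqE eqxx /= -val_eqE /=.
    move=> h; lia.
  have h2 : (Lf I i.+1 < Lf I i)%N.
    case: i hall hx h1 => [[|i] hi] hall hx h1.
      rewrite [Lf I 0]/Lf; have := ltn_ord j; lia.
    rewrite /= in hx h1 *.
    have ib : (i < a)%N by lia.
    have := hall (Ordinal ib, j); rewrite memL // /gle /= xpair_eqE eqxx /= -val_eqE /= andbT.
    move=> h; lia.
  apply/andP; split => //; lia.
- move=> /andP [/eqP hj hlt]; apply/andP; split.
    by rewrite memL // -leqNgt hj.
  apply/forallP => -[i' j']; apply/implyP; rewrite memL // -leqNgt /gle /=.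
  move=> /and3P [h1 h2 h3].
  have ei : nat_of_ord i' = nat_of_ord i.
    apply/eqP; rewrite eqn_leq h2 /=; rewrite leqNgt; apply/negP => h.
    have := mono i'.+1 i h; lia.
  rewrite xpair_eqE -!val_eqE /= ei eqxx /=; rewrite ei in h1; lia.
Qed.

Lemma TminusE (R : realType) a b (I : {set grid a b}) : is_ideal I ->
  forall (i : 'I_a) (j : 'I_b),
  Tminus R (i, j) I = ((j.+1 == Lf I i.+1 :> nat) && (Lf I i.+2 < Lf I i.+1))%N%:R.
Proof.
move=> hI i j; rewrite /Tminus; congr ((nat_of_bool _)%:R).
have mono := Lf_mono hI.
have Lb := Lf_le_b.
apply/idP/idP.
- move=> /andP [hx /forallP hall]; rewrite memL // in hx.
  have h1 : (Lf I i.+1 <= j.+1)%N.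
    case: (ltnP j.+1 b) => jb; last by have := Lb _ _ I i.+1 hI; lia.
    have := hall (i, Ordinal jb); rewrite memL // /gle /= xpair_eqE eqxx /= -val_eqE /=.
    move=> h; lia.
  have h2 : (Lf I i.+2 <= j)%N.
    case: (ltnP i.+1 a) => ib; last by rewrite Lf_big //; lia.
    have := hall (Ordinal ib, j); rewrite memL // /gle /= xpair_eqE eqxx /= -val_eqE /= andbT.
    move=> h; lia.
  apply/andP; split => //; lia.
- move=> /andP [/eqP hj hlt]; apply/andP; split.
    by rewrite memL // -hj.
  apply/forallP => -[i' j']; apply/implyP; rewrite memL // /gle /=.
  move=> /and3P [h1 h2 h3].
  have ei : nat_of_ord i' = nat_of_ord i.
    apply/eqP; rewrite eqn_leq h2 andbT; rewrite leqNgt; apply/negP => h.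
    have := mono i.+2 i'.+1 h; lia.
  rewrite xpair_eqE -!val_eqE /= ei eqxx /=; rewrite ei in h1; lia.
Qed.

Lemma sum_eq1 (R : realType) b (F : nat -> R) m :
  \sum_(j < b) F j * (j == m :> nat)%:R = (m < b)%N%:R * F m.
Proof.
elim: b => [|b IH]; first by rewrite big_ord0 mul0r.
rewrite big_ord_recr /= IH.
case: (ltngtP m b) => h.
- by rewrite ltnS (ltnW h) mulr0 addr0.
- by rewrite ltnS leqNgt h mulr0 mul0r addr0.
- by rewrite h ltnSn mul0r add0r mulr1 mul1r.
Qed.

Lemma sum_lt1 (R : realType) b m :
  \sum_(j < b) ((j < m)%N%:R : R) = (minn m b)%:R.
Proof.
elim: b => [|b IH]; first by rewrite big_ord0 minn0.
rewrite big_ord_recr /= IH -natrD; congr (_%:R).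
case: (ltnP b m) => h /=; lia.
Qed.

Lemma sum_grid (R : realType) a b (F : grid a b -> R) :
  \sum_(p : grid a b) F p = \sum_(i < a) \sum_(j < b) F (i, j).
Proof. by rewrite pair_bigA; apply: eq_bigr => -[]. Qed.

Definition gg (R : realType) (a b : nat) (x : R) : R :=
  - ((x + a%:R) * (b%:R - x)) / 2.

Definition Erow (R : realType) a b (L : nat -> nat) (i : nat) : R :=
  (L i.+1 < L i)%N%:R * gg a b ((L i.+1)%:R - i%:R)
  - (L i.+2 < L i.+1)%N%:R * gg a b ((L i.+1)%:R - 1 - i%:R).

Lemma tele (R : realType) a b (L : nat -> nat) :
  (forall k, (L k.+1 <= L k)%N) -> L 0 = b -> L a.+1 = 0%N ->
  \sum_(i < a) Erow R a b L i = \sum_(i < a) (L i.+1)%:R - (a * b)%:R / 2.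
Proof.
move=> mono L0 La.
pose P (n : nat) : R := (L n.+1 < L n)%N%:R * gg a b ((L n.+1)%:R - n%:R).
have C : forall n, \sum_(i < n) Erow R a b L i + P n =
   gg a b ((L n.+1)%:R - n%:R) + \sum_(i < n) (L i.+1)%:R
   - (n%:R * (n%:R - 1)) / 2 - n%:R * (1 - a%:R + b%:R) / 2.
  elim=> [|n IH].
    rewrite !big_ord0 /P /gg L0.
    case: (ltnP (L 1) b) => h; first by rewrite /=; field.
    have e : L 1 = b by apply/eqP; rewrite eqn_leq h andbT -[X in (_ <= X)%N]L0 mono.
    rewrite e /=; by field.
  rewrite !big_ord_recr /=.
  have -> : \sum_(i < n) Erow R a b L i + Erow R a b L n + P n.+1
     = (\sum_(i < n) Erow R a b L i + P n) + (Erow R a b L n - P n + P n.+1) by ring.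
  rewrite IH /Erow /P /gg.
  case: (ltnP (L n.+2) (L n.+1)) => h.
    rewrite /=; by field.
  have e : L n.+2 = L n.+1 by apply/eqP; rewrite eqn_leq h andbT mono.
  rewrite e /=; by field.
have := C a; rewrite /P /gg La => H.
have -> : \sum_(i < a) Erow R a b L i =
   \sum_(i < a) Erow R a b L i + (L a.+1 < L a)%N%:R * gg a b ((L a.+1)%:R - a%:R)
   - (L a.+1 < L a)%N%:R * gg a b ((L a.+1)%:R - a%:R) by ring.
rewrite /gg La H natrM /=; by field.
Qed.

Lemma rowplus (R : realType) a b (I : {set grid a b}) : is_ideal I ->
  forall i : 'I_a,
  \sum_(j < b) gg a b ((j : nat)%:R - (i : nat)%:R) * Tplus R (i, j) I
  = (Lf I i.+1 < Lf I i)%N%:R * gg a b ((Lf I i.+1)%:R - (i : nat)%:R).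
Proof.
move=> hI i.
under eq_bigr => j _ do rewrite TplusE // -mulnb natrM mulrA mulrAC.
rewrite (sum_eq1 _ (fun j : nat => gg a b (j%:R - (i : nat)%:R) * (Lf I i.+1 < Lf I i)%N%:R)).
case: (ltnP (Lf I i.+1) (Lf I i)) => h /=; last by rewrite !mulr0 mul0r.
have hb := Lf_le_b (i : nat) hI.
by rewrite (leq_trans h hb) /= mulr1 !mul1r.
Qed.

Lemma rowminus (R : realType) a b (I : {set grid a b}) : is_ideal I ->
  forall i : 'I_a,
  \sum_(j < b) gg a b ((j : nat)%:R - (i : nat)%:R) * Tminus R (i, j) I
  = (Lf I i.+2 < Lf I i.+1)%N%:R * gg a b ((Lf I i.+1)%:R - 1 - (i : nat)%:R).
Proof.
move=> hI i.
under eq_bigr => j _ do rewrite TminusE //.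
case: (ltnP (Lf I i.+2) (Lf I i.+1)) => h /=; last first.
  by rewrite mul0r big1 // => j _; rewrite andbF mulr0.
have pos : (0 < Lf I i.+1)%N by apply: leq_ltn_trans h.
have e := prednK pos.
under eq_bigr => j _ do rewrite -e eqSS andbT.
rewrite (sum_eq1 _ (fun j : nat => gg a b (j%:R - (i : nat)%:R))).
have hb := Lf_le_b (i.+1) hI.
have -> : ((Lf I i.+1).-1 < b)%N by rewrite -ltnS e ltnS.
rewrite -[in RHS]e; congr (_ * gg _ _ _).
by rewrite -[in RHS]natr1; ring.
Qed.

Theorem corollary3p11 (R : realType) (a b : nat) :
  (1 <= a)%N -> (1 <= b)%N ->
  toggle_equiv (fun I => \sum_(p : grid a b) ind R p I)
               (fun _ => (a * b)%:R / 2 : R).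
Proof.
move=> ha hb.
exists (fun p : grid a b => gg a b ((p.2 : nat)%:R - (p.1 : nat)%:R)).
move=> I hI.
rewrite (sum_grid (fun p => ind R p I)).
rewrite (sum_grid (fun x : grid a b => gg a b ((x.2 : nat)%:R - (x.1 : nat)%:R) * Tog R x I)) /=.
have -> : \sum_(i < a) \sum_(j < b) ind R (i, j) I = \sum_(i < a) (Lf I i.+1)%:R.
  apply: eq_bigr => i _.
  under eq_bigr => j _ do rewrite /ind memL //.
  by rewrite sum_lt1; congr (_%:R); apply/minn_idPl; apply: Lf_le_b.
have -> : \sum_(i < a) \sum_(j < b) gg a b ((j : nat)%:R - (i : nat)%:R) * Tog R (i, j) I
        = \sum_(i < a) Erow R a b (Lf I) i.
  apply: eq_bigr => i _.
  under eq_bigr => j _ do rewrite /Tog mulrBr.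
  by rewrite sumrB rowplus // rowminus.
rewrite tele //.
- by move=> k; apply: Lf_mono.
- by rewrite Lf_big.
Qed.
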